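(* Let $n$ be a positive integer and consider the function $f(m)=\binom{n}{m}m^3$ defined for integers $0\le m\le n$. Then $f$ is maximized at $m=\lceil n/2\rceil+1$ if $n\ge 2$, and at $m=1$ if $n=1$. *)

(* Defs.v *)
From mathcomp Require Import all_boot.
Set Implicit Arguments. Unset Strict Implicit. Unset Printing Implicit Defensive.

Definition fbin (n m : nat) : nat := 'C(n, m) * m ^ 3.

Definition ceil_half (n : nat) : nat := (n + 1) %/ 2.

Definition is_maximizer (n m0 : nat) : Prop :=
  m0 <= n /\ forall m, m <= n -> fbin n m <= fbin n m0.

(* Main.v *)
Require Import Defs.
From mathcomp Require Import all_boot.
From mathcomp Require Import zify.

Lemma step n m : fbin n m.+1 * m ^ 3 = fbin n m * ((n - m) * m.+1 ^ 2).
Proof.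
rewrite /fbin; have H := mul_bin_left n m.
set c := 'C(n, m.+1) in H *; set d := 'C(n, m) in H *.
have -> : c * m.+1 ^ 3 * m ^ 3 = (m.+1 * c) * (m.+1 ^ 2 * m ^ 3).
  by rewrite !expnS !expn0 !muln1; lia.
rewrite H. rewrite !expnS !expn0 !muln1; lia.
Qed.

Lemma up n m : 2 <= n -> 2 * m <= n + 1 -> fbin n m <= fbin n m.+1.
Proof.
move=> hn hm; case: m hm => [|m] hm; first by rewrite /fbin muln0.
have S := step n m.+1.
have P : m.+1 ^ 3 <= (n - m.+1) * m.+2 ^ 2.
  rewrite !expnS !expn0 !muln1; nia.
have hp : 0 < m.+1 ^ 3 by rewrite expn_gt0.
rewrite -(leq_pmul2r hp) S; exact: leq_mul.
Qed.

Lemma down n m : 0 < m -> n + 2 <= 2 * m -> fbin n m.+1 <= fbin n m.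
Proof.
move=> h0 hm.
have S := step n m.
have P : (n - m) * m.+1 ^ 2 <= m ^ 3.
  have t : n - m <= m - 2 by lia.
  apply: leq_trans (leq_mul t (leqnn _)) _.
  clear S; case: m h0 hm t => [|[|[|m]]] //= h0 hm t; rewrite !expnS !expn0 !muln1; nia.
have hp : 0 < m ^ 3 by rewrite expn_gt0 h0.
rewrite -(leq_pmul2r hp) S; exact: leq_mul (leqnn _) P.
Qed.

Theorem proposition2 (n : nat) (hn : 0 < n) :
  is_maximizer n (if 2 <= n then ceil_half n + 1 else 1).
Proof.
case: ifP => h2.
  rewrite /ceil_half; set k := (n + 1) %/ 2 + 1.
  have hk : 2 * (k - 1) <= n + 1 /\ n + 1 <= 2 * (k - 1) + 1 by rewrite /k; lia.
  split; first by rewrite /k; lia.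
  move=> m hm; case: (leqP m k) => hmk.
    rewrite -(subKn hmk); elim: (k - m) (leq_subr m k) => [|d IH] hd.
      by rewrite subn0.
    apply: leq_trans (IH (ltnW hd)).
    have -> : k - d = (k - d.+1).+1 by lia.
    apply: up => //; lia.
  rewrite -(subnK (ltnW hmk)); elim: (m - k) => [|d IH]; first by [].
  apply: leq_trans IH; rewrite addSn; apply: down; lia.
have -> : n = 1 by lia.
split => // m; case: m => [|[|]] //.
Qed.
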